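(* Under the standing setup, let $u\in\widetilde X$. If $u\in\overline X$, then $\|\beta(u)-\beta(v)\|\le3\|u-v\|^{1/2}$ for all $v\in B(u,1)\cap\widetilde X$. If $u\notin\overline X$, set $r_u=\min\{1,\frac{\varepsilon\|u-u_{NN}\|}{480}\}$ and $\widetilde C_u=\frac1\varepsilon\max\{1200,\,480+128\|u-u_{NN}\|^{1/2}\}$; then \[\|\beta(u)-\beta(v)\|\le\widetilde C_u\|u-v\|^{1/2}\quad\forall\,v\in B(u,r_u)\cap\widetilde X.\]
   Context: Norms are Euclidean; $B(x,r)$ is the open ball; $\overline X$ is the closure. Standing setup: $X\subseteq\mathbb{R}^d$ has reach $\tau_X>0$, where $\tau_X=\sup\{t\ge0:\text{every }x\text{ with }d(x,X)<t\text{ has a unique closest point in }\overline X\}$; $\widetilde X=X+B(0,\tau_X/2)$; for $u\in\widetilde X$, $u_{NN}$ is the unique closest point to $u$ in $\overline X$, and it is a known fact that $\|u_{NN}-v_{NN}\|\le2\|u-v\|$ for all $u,v\in\widetilde X$. $\varepsilon\in(0,1)$. $S_X=\overline{\{(x-y)/\|x-y\|:x\ne y\in X\}}$. A linear $\Pi\colon\mathbb{R}^d\to\mathbb{R}^m$ provides $\eta$-convex hull distortion for $T\subseteq S^{d-1}$ if $|\,\|\Pi x\|-\|x\|\,|<\eta$ for all $x\in\operatorname{conv}(T)$. $\mathcal C=\{w_1,\ldots,w_\ell\}\subseteq S_X$ is finite with every $v\in S_X$ within distance $<\varepsilon/40$ of some $w_i$; $\Pi\in\mathbb{R}^{m\times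 d}$ provides $\frac{\varepsilon}{240}$-convex hull distortion for $S_X$. For $z\in\mathbb{R}^m$, $u\in\widetilde X$, $i=1,\ldots,\ell$: $\tilde g_i(z,u)=\langle z,\Pi w_i\rangle-\langle u-u_{NN},w_i\rangle-\frac{\varepsilon}{30}\|u-u_{NN}\|$, $\tilde g_{\ell+i}(z,u)=\langle u-u_{NN},w_i\rangle-\langle z,\Pi w_i\rangle-\frac{\varepsilon}{30}\|u-u_{NN}\|$; $\widetilde F_u=\{z:\tilde g_i(z,u)\le0,\ i=1,\ldots,2\ell\}$ (nonempty, closed, convex); $\beta(u)=\arg\min_{z\in\widetilde F_u}\|z\|$. *)

(* Defs.v *)
From HB Require Import structures.
From mathcomp Require Import all_boot all_order all_algebra.
From mathcomp Require Import classical_sets reals constructive_ereal ereal.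
Set Implicit Arguments. Unset Strict Implicit. Unset Printing Implicit Defensive.
Import Order.TTheory GRing.Theory Num.Theory.
Local Open Scope classical_set_scope.
Local Open Scope ring_scope.

Section Defs.
Variable R : realType.

Definition edot n (x y : 'rV[R]_n) : R := \sum_(i < n) x 0 i * y 0 i.
Definition enorm n (x : 'rV[R]_n) : R := Num.sqrt (edot x x).

Definition eclosure n (A : set 'rV[R]_n) : set 'rV[R]_n :=
  [set p | forall e : R, 0 < e -> exists2 a, A a & enorm (a - p) < e].

Definition dist_set n (X : set 'rV[R]_n) (x : 'rV[R]_n) : R :=
  inf [set enorm (x - y) | y in X].

Definition is_closest n (X : set 'rV[R]_n) (x p : 'rV[R]_n) : Prop :=
  eclosure X p /\ forall q, eclosure X q -> enorm (x - p) <= enorm (x - q).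

Definition unique_closest n (X : set 'rV[R]_n) (x : 'rV[R]_n) : Prop :=
  exists p, is_closest X x p /\ forall q, is_closest X x q -> q = p.

Definition reach n (X : set 'rV[R]_n) : \bar R :=
  ereal_sup [set t%:E | t in [set t : R | 0 <= t /\
     forall x, dist_set X x < t -> unique_closest X x]].

(* X~ = X + B(0, tau_X/2) (open ball), i.e. points at distance < tau_X/2
   from some point of X; written as 2 ||u - x|| < tau_X *)
Definition Xtilde n (X : set 'rV[R]_n) : set 'rV[R]_n :=
  [set u | exists2 x, X x & ((2 * enorm (u - x))%:E < reach X)%E].

Definition nn n (X : set 'rV[R]_n) (u : 'rV[R]_n) : 'rV[R]_n :=
  xget 0 (is_closest X u).

Definition secants n (X : set 'rV[R]_n) : set 'rV[R]_n :=
  eclosure [set v | exists x y, [/\ X x, X y, x <> y & v = (enorm (x - y))^-1 *: (x - y)]].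

Definition conv n (T : set 'rV[R]_n) : set 'rV[R]_n :=
  [set x | exists (k : nat) (t : 'I_k -> 'rV[R]_n) (lam : 'I_k -> R),
     [/\ forall j, T (t j), forall j, 0 <= lam j, \sum_(j < k) lam j = 1
       & x = \sum_(j < k) lam j *: t j]].

Definition applyPi d m (Pi : 'M[R]_(d, m)) (x : 'rV[R]_d) : 'rV[R]_m := x *m Pi.

Definition convex_hull_distortion d m (Pi : 'M[R]_(d, m)) (eta : R)
  (T : set 'rV[R]_d) : Prop :=
  forall x, conv T x -> `| enorm (applyPi Pi x) - enorm x | < eta.

Definition gtilde d m (X : set 'rV[R]_d) (Pi : 'M[R]_(d, m)) (eps : R)
  l (w : 'I_l -> 'rV[R]_d) (i : 'I_l) (upper : bool)
  (z : 'rV[R]_m) (u : 'rV[R]_d) : R :=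
  if ~~ upper then
    edot z (applyPi Pi (w i)) - edot (u - nn X u) (w i) - eps / 30 * enorm (u - nn X u)
  else
    edot (u - nn X u) (w i) - edot z (applyPi Pi (w i)) - eps / 30 * enorm (u - nn X u).

Definition Ftilde d m (X : set 'rV[R]_d) (Pi : 'M[R]_(d, m)) (eps : R)
  l (w : 'I_l -> 'rV[R]_d) (u : 'rV[R]_d) : set 'rV[R]_m :=
  [set z | forall (i : 'I_l) (b : bool), gtilde X Pi eps w i b z u <= 0].

Definition beta d m (X : set 'rV[R]_d) (Pi : 'M[R]_(d, m)) (eps : R)
  l (w : 'I_l -> 'rV[R]_d) (u : 'rV[R]_d) : 'rV[R]_m :=
  xget 0 [set z | Ftilde X Pi eps w u z /\
                  forall z', Ftilde X Pi eps w u z' -> enorm z <= enorm z'].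

End Defs.

(* Main.v *)
Require Import Defs.
From HB Require Import structures.
From mathcomp Require Import all_boot all_order all_algebra.
From mathcomp Require Import classical_sets reals constructive_ereal ereal.
From mathcomp Require Import boolp topology normedtype realfun derive.
From mathcomp Require Import ring lra.
Import Order.TTheory GRing.Theory Num.Theory.
Local Open Scope classical_set_scope.
Import numFieldNormedType.Exports.
Local Open Scope ring_scope.
Set Implicit Arguments. Unset Strict Implicit. Unset Printing Implicit Defensive.

Lemma edotC (R : realType) n (x y : 'rV[R]_n) : edot x y = edot y x.
Proof. by apply: eq_bigr => i _; rewrite mulrC. Qed.

Lemma edotDl (R : realType) n (x y z : 'rV[R]_n) :
  edot (x + y) z = edot x z + edot y z.
Proof. by rewrite /edot -big_split; apply: eq_bigr => i _; rewrite mxE mulrDl. Qed.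

Lemma edotZl (R : realType) n (a : R) (x y : 'rV[R]_n) :
  edot (a *: x) y = a * edot x y.
Proof. by rewrite /edot mulr_sumr; apply: eq_bigr => i _; rewrite mxE mulrA. Qed.

Lemma edotNl (R : realType) n (x y : 'rV[R]_n) : edot (- x) y = - edot x y.
Proof. by rewrite -scaleN1r edotZl mulN1r. Qed.

Lemma edotBl (R : realType) n (x y z : 'rV[R]_n) :
  edot (x - y) z = edot x z - edot y z.
Proof. by rewrite edotDl edotNl. Qed.

Lemma edotDr (R : realType) n (x y z : 'rV[R]_n) :
  edot z (x + y) = edot z x + edot z y.
Proof. by rewrite edotC edotDl !(edotC z). Qed.

Lemma edotZr (R : realType) n (a : R) (x y : 'rV[R]_n) :
  edot y (a *: x) = a * edot y x.
Proof. by rewrite edotC edotZl edotC. Qed.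

Lemma edotBr (R : realType) n (x y z : 'rV[R]_n) :
  edot z (x - y) = edot z x - edot z y.
Proof. by rewrite edotC edotBl !(edotC z). Qed.

Lemma edot0l (R : realType) n (x : 'rV[R]_n) : edot 0 x = 0.
Proof. by rewrite /edot big1 // => i _; rewrite mxE mul0r. Qed.

Lemma edot0r (R : realType) n (x : 'rV[R]_n) : edot x 0 = 0.
Proof. by rewrite edotC edot0l. Qed.

Lemma edot_suml (R : realType) n k (f : 'I_k -> 'rV[R]_n) y :
  edot (\sum_(j < k) f j) y = \sum_(j < k) edot (f j) y.
Proof.
elim: k f => [|k IH] f; first by rewrite !big_ord0 edot0l.
by rewrite !big_ord_recr /= edotDl IH.
Qed.

Lemma edot_sumr (R : realType) n k (f : 'I_k -> 'rV[R]_n) y :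
  edot y (\sum_(j < k) f j) = \sum_(j < k) edot y (f j).
Proof. rewrite edotC edot_suml; apply: eq_bigr => j _; exact: edotC. Qed.

Lemma edot_ge0 (R : realType) n (x : 'rV[R]_n) : 0 <= edot x x.
Proof. by apply: sumr_ge0 => i _; rewrite -expr2 sqr_ge0. Qed.

Lemma enorm_ge0 (R : realType) n (x : 'rV[R]_n) : 0 <= enorm x.
Proof. exact: sqrtr_ge0. Qed.

Lemma enorm_sq (R : realType) n (x : 'rV[R]_n) : enorm x ^+ 2 = edot x x.
Proof. by rewrite sqr_sqrtr // edot_ge0. Qed.

Lemma edot_eq0 (R : realType) n (x : 'rV[R]_n) : edot x x = 0 -> x = 0.
Proof.
move=> H; apply/matrixP => i j; rewrite mxE ord1.
have hge : forall k : 'I_n, xpredT k -> 0 <= x 0 k * x 0 k.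
  by move=> k _; rewrite -expr2 sqr_ge0.
have hj := @psumr_eq0P _ _ xpredT (fun j => x 0 j * x 0 j) hge H j isT.
by apply/eqP; move: hj => /= /eqP; rewrite mulf_eq0 orbb.
Qed.

Lemma enorm_eq0 (R : realType) n (x : 'rV[R]_n) : enorm x = 0 -> x = 0.
Proof.
move=> /eqP; rewrite sqrtr_eq0 => H; apply: edot_eq0.
by apply/eqP; rewrite eq_le H edot_ge0.
Qed.

Lemma enorm0 (R : realType) n : enorm (0 : 'rV[R]_n) = 0.
Proof. by rewrite /enorm edot0l sqrtr0. Qed.

Lemma enormZ (R : realType) n (a : R) (x : 'rV[R]_n) : enorm (a *: x) = `|a| * enorm x.
Proof.
by rewrite /enorm edotZl edotZr mulrA -expr2 sqrtrM ?sqr_ge0 // sqrtr_sqr.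
Qed.

Lemma enormN (R : realType) n (x : 'rV[R]_n) : enorm (- x) = enorm x.
Proof. by rewrite -scaleN1r enormZ normrN normr1 mul1r. Qed.

Lemma enormB (R : realType) n (x y : 'rV[R]_n) : enorm (x - y) = enorm (y - x).
Proof. by rewrite -enormN opprB. Qed.

Lemma sq_le (R : realType) (a b : R) : 0 <= b -> a ^+ 2 <= b ^+ 2 -> a <= b.
Proof. move=> hb h; rewrite !expr2 in h; nra. Qed.

Lemma CS (R : realType) n (x y : 'rV[R]_n) : edot x y <= enorm x * enorm y.
Proof.
have hx := enorm_ge0 x; have hy := enorm_ge0 y.
have H : 0 <= edot (enorm y *: x - enorm x *: y) (enorm y *: x - enorm x *: y)
  by exact: edot_ge0.
rewrite !(edotBl, edotBr, edotZl, edotZr) -!enorm_sq (edotC y x) in H.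
have [hx0|hx0] := eqVneq (enorm x) 0.
  by rewrite (enorm_eq0 hx0) edot0l enorm0 mul0r.
have [hy0|hy0] := eqVneq (enorm y) 0.
  by rewrite (enorm_eq0 hy0) edot0r enorm0 mulr0.
have hp : 0 < enorm x * enorm y by rewrite mulr_gt0 // lt0r ?hx0 ?hy0.
rewrite !expr2 in H; nra.
Qed.

Lemma CSabs (R : realType) n (x y : 'rV[R]_n) : `|edot x y| <= enorm x * enorm y.
Proof.
have h1 := CS x y; have h2 := CS x (- y).
rewrite -scaleN1r edotZr enormZ normrN normr1 mul1r mulN1r in h2.
rewrite ler_norml; apply/andP; split; lra.
Qed.

Lemma enormD (R : realType) n (x y : 'rV[R]_n) : enorm (x + y) <= enorm x + enorm y.
Proof.
apply: sq_le; first by rewrite addr_ge0 // enorm_ge0.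
rewrite enorm_sq edotDl !edotDr -!enorm_sq (edotC y x).
have := CS x y; rewrite !expr2; nra.
Qed.
Lemma cont_sum (R : realType) n k (F : 'I_k -> 'rV[R]_n -> R) :
  (forall j, continuous (F j)) -> continuous (fun z => \sum_(j < k) F j z).
Proof.
elim: k F => [|k IH] F HF.
  under eq_fun do rewrite big_ord0. exact: cst_continuous.
under eq_fun do rewrite big_ord_recr /=.
move=> z; apply: continuousD; first exact: (IH (fun j => F (widen_ord (leqnSn k) j))).
exact: HF.
Qed.

Lemma cont_edot (R : realType) n (a : 'rV[R]_n) : continuous (fun z => edot z a).
Proof.
have := @cont_sum R n n (fun j z => z 0 j * a 0 j).
apply => j z.
apply: continuousM; [exact: coord_continuous | exact: cst_continuous].
Qed.

Lemma cont_enorm (R : realType) n : continuous (fun z : 'rV[R]_n => enorm z).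
Proof.
have h : continuous (fun z : 'rV[R]_n => edot z z).
  have := @cont_sum R n n (fun j z => z 0 j * z 0 j).
  apply => j y.
  by apply: continuousM; exact: coord_continuous.
move=> z; exact: (continuous_comp (h z) (@sqrt_continuous R _)).
Qed.

Lemma coord_le_enorm (R : realType) n (x : 'rV[R]_n) i : `|x 0 i| <= enorm x.
Proof.
apply: sq_le; first exact: sqrtr_ge0.
rewrite sqr_sqrtr; last by apply: sumr_ge0 => j _; rewrite -expr2 sqr_ge0.
rewrite real_normK ?num_real // /edot (bigD1 i) //= expr2 lerDl.
by apply: sumr_ge0 => j _; rewrite -expr2 sqr_ge0.
Qed.

Lemma mxnorm_le (R : realType) n (x : 'rV[R]_n) : `|x| <= enorm x.
Proof.
have -> : `|x| = mx_norm x by [].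
rewrite mx_normrE.
apply: bigmax_le; first exact: sqrtr_ge0.
by move=> [i j] _ /=; rewrite ord1; exact: coord_le_enorm.
Qed.

Lemma exists_min (R : realType) n (f : 'rV[R]_n -> R) (C : set 'rV[R]_n) (M : R) :
  continuous f -> closed C -> (forall z, C z -> enorm z <= M) -> C !=set0 ->
  exists2 c, C c & forall z, C z -> f c <= f z.
Proof.
move=> cf cC bC C0.
have cpt : compact C.
  apply: bounded_closed_compact => //.
  exists M; split; first exact: num_real.
  move=> K hK x Cx /=.
  by apply: le_trans (mxnorm_le x) _; apply: le_trans (bC _ Cx) (ltW hK).
have [c cC' hc] := EVT_min_rV C0 cpt (continuous_subspaceT cf).
exists c; first by rewrite inE in cC'.
by move=> z Cz; apply: hc; rewrite inE.
Qed.

Lemma applyPiD (R : realType) d m (Pi : 'M[R]_(d, m)) x y :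
  applyPi Pi (x + y) = applyPi Pi x + applyPi Pi y.
Proof. by rewrite /applyPi mulmxDl. Qed.

Lemma applyPiZ (R : realType) d m (Pi : 'M[R]_(d, m)) (a : R) x :
  applyPi Pi (a *: x) = a *: applyPi Pi x.
Proof. by rewrite /applyPi scalemxAl. Qed.

Lemma applyPi_sum (R : realType) d m (Pi : 'M[R]_(d, m)) k (f : 'I_k -> 'rV[R]_d) :
  applyPi Pi (\sum_(j < k) f j) = \sum_(j < k) applyPi Pi (f j).
Proof. by rewrite /applyPi mulmx_suml. Qed.

Lemma enorm_pos_neq (R : realType) n (x y : 'rV[R]_n) : x <> y -> 0 < enorm (x - y).
Proof.
move=> xy; rewrite lt0r enorm_ge0 andbT; apply/eqP => /enorm_eq0 /eqP.
by rewrite subr_eq0 => /eqP.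
Qed.

Lemma secants_norm (R : realType) d (X : set 'rV[R]_d) v :
  secants X v -> enorm v <= 1.
Proof.
move=> Hs; rewrite leNgt; apply/negP => hv.
have he : 0 < enorm v - 1 by rewrite subr_gt0.
have [a [x [y [Xx Xy xy ->]]] ha] := Hs _ he.
have hxy := enorm_pos_neq xy.
have h1 : enorm ((enorm (x - y))^-1 *: (x - y)) = 1.
  by rewrite enormZ ger0_norm ?invr_ge0 ?enorm_ge0 // mulVf // gt_eqF.
move: ha h1; set b := (enorm (x - y))^-1 *: (x - y) => ha h1.
have := enormD b (v - b).
rewrite (addrC b) subrK h1 (enormB v); lra.
Qed.

Lemma secantsN (R : realType) d (X : set 'rV[R]_d) v :
  secants X v -> secants X (- v).
Proof.
move=> Hs e he; have [a [x [y [Xx Xy xy ->]]] ha] := Hs _ he.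
exists ((enorm (y - x))^-1 *: (y - x)).
  by exists y, x; split => //; apply: nesym.
have E : (enorm (y - x))^-1 *: (y - x) - - v = - ((enorm (x - y))^-1 *: (x - y) - v).
  by rewrite (enormB y) -(opprB x y) scalerN opprD opprK.
by rewrite E enormN.
Qed.

Lemma nn_spec (R : realType) d (X : set 'rV[R]_d) u :
  Xtilde X u -> is_closest X u (nn X u).
Proof.
move=> [x Xx hx].
have [_ [t [t0 Ht] <-] ht] := ereal_sup_gt hx.
rewrite lte_fin in ht.
have hd : dist_set X u <= enorm (u - x).
  apply: ge_inf; last by exists x.
  by exists 0 => _ [y _ <-]; exact: enorm_ge0.
have hu : dist_set X u < t.
  by apply: le_lt_trans hd _; have := enorm_ge0 (u - x); lra.
have [p [Hp _]] := Ht u hu.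
by apply: xgetPex; exists p.
Qed.

Lemma conv_comb (R : realType) d (X : set 'rV[R]_d) l (w : 'I_l -> 'rV[R]_d)
  (y : 'I_l -> R) :
  (forall i, secants X (w i)) -> 0 < \sum_(j < l) `|y j| ->
  conv (secants X) ((\sum_(j < l) `|y j|)^-1 *: \sum_(j < l) y j *: w j).
Proof.
set S := \sum_(j < l) `|y j|; move=> Hw hS.
exists l, (fun j => if 0 <= y j then w j else - w j), (fun j => `|y j| / S).
split.
- by move=> j; case: ifP => _; [exact: Hw | exact: secantsN].
- by move=> j; rewrite divr_ge0 // ltW.
- by rewrite -mulr_suml mulfV // gt_eqF.
- rewrite scaler_sumr; apply: eq_bigr => j _; rewrite scalerA.
  case: ifP => h; first by rewrite ger0_norm // mulrC.
  rewrite ltr0_norm ?ltNge ?h // scalerN -scaleNr; congr (_ *: _).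
  by rewrite mulNr opprK mulrC.
Qed.

Lemma HPi_use (R : realType) d m (X : set 'rV[R]_d) (Pi : 'M[R]_(d, m)) (eps : R)
  l (w : 'I_l -> 'rV[R]_d) (y : 'I_l -> R) :
  (forall i, secants X (w i)) ->
  convex_hull_distortion Pi (eps / 240) (secants X) ->
  0 < \sum_(j < l) `|y j| ->
  enorm (\sum_(j < l) y j *: w j) - (\sum_(j < l) `|y j|) * (eps / 240)
    < enorm (applyPi Pi (\sum_(j < l) y j *: w j)).
Proof.
move=> Hw HPi hS.
have := HPi _ (conv_comb Hw hS).
rewrite applyPiZ !enormZ.
set S := \sum_(j < l) `|y j|.
set x := \sum_(j < l) y j *: w j.
have hiS : 0 < S^-1 by rewrite invr_gt0.
rewrite (ger0_norm (ltW hiS)) => H.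
have H1 : S^-1 * enorm x - S^-1 * enorm (applyPi Pi x) < eps / 240.
  by move: H; rewrite ltr_norml => /andP [H _]; lra.
have H2 : S * S^-1 = 1 by rewrite mulfV // gt_eqF.
set E := eps / 240 in H1 *.
have H3 : S * (S^-1 * enorm x - S^-1 * enorm (applyPi Pi x)) < S * E.
  by rewrite ltr_pM2l.
rewrite mulrBr !mulrA H2 !mul1r in H3; rewrite /E mulrA; lra.
Qed.

Definition psi (R : realType) (eta r : R) : R :=
  ((r - eta) + `|r - eta| + (r + eta) - `|r + eta|) / 2.

Ltac normcase t := let h := fresh "hn" in
  have [h|h] := lerP 0 t; [rewrite (ger0_norm h) | rewrite (ltr0_norm h)].

Lemma psi_cases (R : realType) (eta r : R) : 0 <= eta ->
  [\/ psi eta r = r - eta /\ eta <= r,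
      psi eta r = 0 /\ - eta <= r <= eta |
      psi eta r = r + eta /\ r <= - eta].
Proof.
rewrite /psi => he; normcase (r - eta); normcase (r + eta).
- by apply: Or31; split; lra.
- lra.
- by apply: Or32; split; [lra|apply/andP; split; lra].
- by apply: Or33; split; lra.
Qed.

Lemma psi0 (R : realType) (eta r : R) : 0 <= eta -> psi eta r = 0 -> `|r| <= eta.
Proof.
move=> he; rewrite ler_norml.
case: (psi_cases r he) => [[-> h]|[-> h]|[-> h]] h0 //; apply/andP; split; lra.
Qed.

Lemma psi_mul (R : realType) (eta r : R) : 0 <= eta ->
  psi eta r * r = psi eta r ^+ 2 + eta * `|psi eta r|.
Proof.
move=> he; case: (psi_cases r he) => [[-> h]|[-> h]|[-> h]].
- rewrite ger0_norm; [rewrite expr2; nra | lra].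
- by rewrite normr0 expr2 !mul0r mulr0 addr0.
- rewrite ler0_norm; [rewrite expr2; nra | lra].
Qed.

Lemma psi_step (R : realType) (eta r h : R) : 0 <= eta ->
  psi eta (r + h) ^+ 2 <= (psi eta r + h) ^+ 2.
Proof.
move=> he; rewrite !expr2.
case: (psi_cases r he) => [[-> h1]|[-> /andP[h1 h2]]|[-> h1]];
case: (psi_cases (r + h) he) => [[-> h3]|[-> /andP[h3 h4]]|[-> h3]]; nra.
Qed.

Lemma cont_psi2 (R : realType) (eta : R) : continuous (fun r : R => psi eta r ^+ 2).
Proof.
have cn : forall c : R, continuous (fun r : R => `|r + c|).
  move=> c r.
  have h1 : {for r, continuous (fun r : R => r + c)}.
    by apply: continuousD; [exact: cvg_id| exact: cst_continuous].
  exact: (@continuous_comp R R R (fun r => r + c) (@Num.norm _ R) r h1 (@norm_continuous _ R _)).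
have cp : continuous (psi eta).
  move=> r; rewrite /psi.
  apply: (@continuousM R R (fun r => (r - eta) + `|r - eta| + (r + eta) - `|r + eta|) (fun _ => 2^-1)); last exact: cst_continuous.
  apply: continuousB; last exact: cn.
  apply: continuousD; last by apply: continuousD; [exact: cvg_id| exact: cst_continuous].
  apply: continuousD; last exact: cn.
  by apply: continuousD; [exact: cvg_id| exact: cst_continuous].
move=> r.
exact: (@continuousM R R (psi eta) (psi eta) r (cp r) (cp r)).
Qed.

Lemma lim0 (R : realType) (a b : R) :
  (forall t, 0 < t -> t <= 1 -> 0 <= a + t * b) -> 0 <= b -> 0 <= a.
Proof.
move=> H hb; rewrite leNgt; apply/negP => ha.
have hba : 0 < b - a by lra.
set t := - a / (b - a).
have ht : t * (b - a) = - a by rewrite /t mulfVK // gt_eqF.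
have ht0 : 0 < t by rewrite /t divr_gt0 // oppr_gt0.
have ht1 : t <= 1 by rewrite /t ler_pdivrMr // mul1r; lra.
have := H t ht0 ht1; nra.
Qed.

Lemma closed_ball (R : realType) n (M : R) : closed [set z : 'rV[R]_n | enorm z <= M].
Proof.
have hc := @closed_le R M.
have hf : {in ~` (fun z : 'rV[R]_n => enorm z) @^-1` [set x | x <= M],
   continuous (fun z : 'rV[R]_n => enorm z)}.
  by move=> x _; exact: cont_enorm.
exact: (preimage_closed hf hc).
Qed.

Lemma ball_convex (R : realType) n (M : R) (x y : 'rV[R]_n) (t : R) :
  enorm x <= M -> enorm y <= M -> 0 <= t -> t <= 1 -> enorm (x + t *: (y - x)) <= M.
Proof.
move=> hx hy h0 h1.
have -> : x + t *: (y - x) = (1 - t) *: x + t *: y.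
  by rewrite scalerBr scalerBl scale1r addrA addrAC.
apply: le_trans (enormD _ _) _; rewrite !enormZ !ger0_norm; nra.
Qed.

Lemma slack_point (R : realType) d m (X : set 'rV[R]_d) (Pi : 'M[R]_(d, m)) (eps : R)
  l (w : 'I_l -> 'rV[R]_d) :
  0 < eps -> (forall i, secants X (w i)) ->
  convex_hull_distortion Pi (eps / 240) (secants X) ->
  forall t : 'rV[R]_d, exists z : 'rV[R]_m, enorm z <= enorm t /\
    forall i, `|edot z (applyPi Pi (w i)) - edot t (w i)| <= enorm t * (eps / 240).
Proof.
move=> he Hw HPi t.
have [T0|Tneq] := eqVneq (enorm t) 0.
  have t0 := enorm_eq0 T0.
  exists 0; rewrite t0 !enorm0 lexx; split => // i.
  by rewrite !edot0l subr0 normr0 mul0r.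
set T := enorm t.
have hT : 0 < T by rewrite lt0r Tneq enorm_ge0.
set eta := T * (eps / 240).
have heta : 0 <= eta by rewrite /eta; apply: mulr_ge0; [exact: ltW | apply: divr_ge0 => //; exact: ltW].
pose a i := applyPi Pi (w i).
pose r (z : 'rV[R]_m) i := edot z (a i) - edot t (w i).
pose g z := \sum_(i < l) psi eta (r z i) ^+ 2.
have cg : continuous g.
  have := @cont_sum R m l (fun i z => psi eta (r z i) ^+ 2); apply => i z.
  apply: (@continuous_comp _ _ _ (fun z => r z i) (fun x => psi eta x ^+ 2)); last first.
    exact: cont_psi2.
  rewrite /r; apply: continuousB; [exact: cont_edot | exact: cst_continuous].
have C0 : [set z : 'rV[R]_m | enorm z <= T] !=set0.
  by exists 0; rewrite /= enorm0 ltW.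
have [zs Czs hmin] := exists_min cg (@closed_ball R m T) (fun z h => h) C0.
pose y i := psi eta (r zs i).
have [S0|Spos] : \sum_(i < l) `|y i| = 0 \/ 0 < \sum_(i < l) `|y i|.
  have := @sumr_ge0 R _ (index_enum 'I_l) xpredT (fun i => `|y i|) (fun i _ => normr_ge0 _).
  by rewrite le0r => /orP [/eqP ->|->]; [left|right].
  exists zs; split => // i.
  have hy : `|y i| = 0.
    exact: (@psumr_eq0P R _ xpredT (fun i => `|y i|) (fun i _ => normr_ge0 _) S0 i isT).
  by apply: psi0 => //; apply/eqP; rewrite -normr_eq0 hy.
exfalso.
set S := \sum_(i < l) `|y i| in Spos.
set x := \sum_(i < l) y i *: w i.
have hPx : applyPi Pi x = \sum_(i < l) y i *: a i.
  by rewrite applyPi_sum; apply: eq_bigr => i _; rewrite applyPiZ.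
set N := enorm (applyPi Pi x).
have FO : forall z, enorm z <= T -> 0 <= edot (z - zs) (applyPi Pi x).
  move=> z hz.
  pose h i := edot (z - zs) (a i).
  have key : forall tau, 0 < tau -> tau <= 1 ->
      0 <= 2 * (\sum_(i < l) y i * h i) + tau * (\sum_(i < l) h i ^+ 2).
    move=> tau h0 h1.
    have Ct := ball_convex Czs hz (ltW h0) h1.
    have hm := hmin _ Ct.
    have hr : forall i, r (zs + tau *: (z - zs)) i = r zs i + tau * h i.
      by move=> i; rewrite /r /h edotDl edotZl addrAC.
    have hle : g (zs + tau *: (z - zs)) <= \sum_(i < l) (y i + tau * h i) ^+ 2.
      by rewrite /g; apply: ler_sum => i _; rewrite hr; exact: psi_step.
    have hexp : \sum_(i < l) (y i + tau * h i) ^+ 2 =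
        g zs + tau * (2 * (\sum_(i < l) y i * h i) + tau * (\sum_(i < l) h i ^+ 2)).
      rewrite mulrDr !mulr_sumr /g -!big_split; apply: eq_bigr => i _ /=.
      rewrite /y; ring.
    have : 0 <= tau * (2 * (\sum_(i < l) y i * h i) + tau * (\sum_(i < l) h i ^+ 2)).
      lra.
    by rewrite pmulr_rge0.
  have hB : 0 <= \sum_(i < l) h i ^+ 2 by apply: sumr_ge0 => i _; exact: sqr_ge0.
  have := lim0 key hB.
  have -> : \sum_(i < l) y i * h i = edot (z - zs) (applyPi Pi x).
    by rewrite hPx edot_sumr; apply: eq_bigr => i _; rewrite edotZr.
  lra.
set zz := - (T / N) *: applyPi Pi x.
have hN : 0 <= N by exact: enorm_ge0.
have [hzz ezz] : enorm zz <= T /\ edot zz (applyPi Pi x) = - (T * N).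
  have [N0|Npos] : N = 0 \/ 0 < N.
    by move: hN; rewrite le0r => /orP [/eqP ->|->]; [left|right].
  - rewrite /zz enormZ edotZl -enorm_sq -/N N0 expr2 !mulr0 oppr0; split => //.
    exact: ltW.
  - rewrite /zz enormZ edotZl -enorm_sq -/N normrN ger0_norm; last first.
      by apply: divr_ge0; exact: ltW.
    split; first by rewrite divfK ?gt_eqF.
    by rewrite expr2; field; rewrite gt_eqF.
have h1 := FO _ hzz; rewrite edotBl ezz in h1.
have hsum : \sum_(i < l) y i * r zs i = g zs + eta * S.
  rewrite /g /S mulr_sumr -big_split; apply: eq_bigr => i _; rewrite /y psi_mul //.
have hsum2 : \sum_(i < l) y i * r zs i = edot zs (applyPi Pi x) - edot t x.
  rewrite hPx edot_sumr /x edot_sumr -sumrB; apply: eq_bigr => i _.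
  by rewrite /r !edotZr; ring.
have hcs := CSabs t x; rewrite ler_norml -/T in hcs; case/andP: hcs => hcs _.
have hpi := HPi_use Hw HPi Spos.
have hg : 0 <= g zs by apply: sumr_ge0 => i _; exact: sqr_ge0.
have hprod : T * (enorm x - N) < T * (S * (eps / 240)).
  by rewrite ltr_pM2l //; rewrite /S /x /N; lra.
have hes : eta * S = T * (S * (eps / 240)) by rewrite /eta; ring.
lra.
Qed.

Lemma Ftilde_abs (R : realType) d m (X : set 'rV[R]_d) (Pi : 'M[R]_(d, m)) (eps : R)
  l (w : 'I_l -> 'rV[R]_d) u z :
  Ftilde X Pi eps w u z <-> forall i,
    `|edot z (applyPi Pi (w i)) - edot (u - nn X u) (w i)| <= eps / 30 * enorm (u - nn X u).
Proof.
split.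
- move=> H i; have h1 := H i false; have h2 := H i true.
  rewrite /gtilde /= in h1 h2; rewrite ler_norml; apply/andP; split; lra.
- move=> H i b; have := H i; rewrite ler_norml /gtilde => /andP [h1 h2].
  by case: b => /=; lra.
Qed.

Lemma cont_affine (R : realType) m (a : 'rV[R]_m) (c k : R) :
  continuous (fun z : 'rV[R]_m => edot z a - c - k) /\
  continuous (fun z : 'rV[R]_m => c - edot z a - k).
Proof.
split => z.
- apply: (@continuousB R R _ (fun z => edot z a - c) (fun _ => k)); last exact: cst_continuous.
  apply: (@continuousB R R _ (fun z => edot z a) (fun _ => c)); last exact: cst_continuous.
  exact: cont_edot.
- apply: (@continuousB R R _ (fun z => c - edot z a) (fun _ => k)); last exact: cst_continuous.
  apply: (@continuousB R R _ (fun _ => c) (fun z => edot z a)); first exact: cst_continuous.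
  exact: cont_edot.
Qed.

Lemma cont_gtilde (R : realType) d m (X : set 'rV[R]_d) (Pi : 'M[R]_(d, m)) (eps : R)
  l (w : 'I_l -> 'rV[R]_d) i b u :
  continuous (fun z : 'rV[R]_m => gtilde X Pi eps w i b z u).
Proof.
rewrite /gtilde; case: b => /=.
- exact: (cont_affine _ _ _).2.
- exact: (cont_affine _ _ _).1.
Qed.

Lemma closed_Ftilde (R : realType) d m (X : set 'rV[R]_d) (Pi : 'M[R]_(d, m)) (eps : R)
  l (w : 'I_l -> 'rV[R]_d) u : closed (Ftilde X Pi eps w u).
Proof.
have -> : Ftilde X Pi eps w u = \bigcap_(p in [set: 'I_l * bool])
    [set z | gtilde X Pi eps w p.1 p.2 z u <= 0].
  apply/seteqP; split => z /= H.
  - by move=> p _; exact: H.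
  - by move=> i b; exact: (H (i, b)).
apply: closed_bigI => p _.
have hc := @closed_le R 0.
have hf : {in ~` (fun z => gtilde X Pi eps w p.1 p.2 z u) @^-1` [set x | x <= 0],
   continuous (fun z => gtilde X Pi eps w p.1 p.2 z u)}.
  by move=> z _; exact: cont_gtilde.
exact: (preimage_closed hf hc).
Qed.

Lemma beta_spec (R : realType) d m (X : set 'rV[R]_d) (Pi : 'M[R]_(d, m)) (eps : R)
  l (w : 'I_l -> 'rV[R]_d) :
  0 < eps -> (forall i, secants X (w i)) ->
  convex_hull_distortion Pi (eps / 240) (secants X) ->
  forall u,
  [/\ Ftilde X Pi eps w u (beta X Pi eps w u),
      (forall z', Ftilde X Pi eps w u z' -> enorm (beta X Pi eps w u) <= enorm z') &
      exists zh, [/\ enorm zh <= enorm (u - nn X u),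
        forall i, `|edot zh (applyPi Pi (w i)) - edot (u - nn X u) (w i)|
           <= enorm (u - nn X u) * (eps / 240) &
        Ftilde X Pi eps w u zh]].
Proof.
move=> he Hw HPi u.
have [zh [hzn hzi]] := slack_point he Hw HPi (u - nn X u).
have Fzh : Ftilde X Pi eps w u zh.
  apply/Ftilde_abs => i; apply: le_trans (hzi i) _.
  have := enorm_ge0 (u - nn X u); nra.
have cC : closed ([set z : 'rV[R]_m | enorm z <= enorm zh] `&` Ftilde X Pi eps w u).
  apply: closedI; [exact: closed_ball | exact: closed_Ftilde].
have C0 : ([set z : 'rV[R]_m | enorm z <= enorm zh] `&` Ftilde X Pi eps w u) !=set0.
  by exists zh; split => //=.
have [zs [hzs Fzs] hmin] := exists_min (@cont_enorm R m) cC (fun z h => h.1) C0.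
have Hex : exists z, Ftilde X Pi eps w u z /\
    forall z', Ftilde X Pi eps w u z' -> enorm z <= enorm z'.
  exists zs; split => // z' Fz'.
  have [hz'|hz'] := lerP (enorm z') (enorm zh).
  - exact: hmin.
  - by apply: le_trans hzs (ltW hz').
have [H1 H2] := xgetPex 0 Hex.
split => //; exists zh; split => //.
Qed.

Lemma sq_add (R : realType) n (x y : 'rV[R]_n) :
  enorm (x + y) ^+ 2 = enorm x ^+ 2 + 2 * edot x y + enorm y ^+ 2.
Proof. rewrite !enorm_sq edotDl !edotDr (edotC y x); ring. Qed.

Lemma Ftilde_convex (R : realType) d m (X : set 'rV[R]_d) (Pi : 'M[R]_(d, m)) (eps : R)
  l (w : 'I_l -> 'rV[R]_d) u z1 z2 (t : R) :
  0 <= t -> t <= 1 -> Ftilde X Pi eps w u z1 -> Ftilde X Pi eps w u z2 ->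
  Ftilde X Pi eps w u (z1 + t *: (z2 - z1)).
Proof.
move=> h0 h1 /Ftilde_abs H1 /Ftilde_abs H2; apply/Ftilde_abs => i.
have := H1 i; have := H2 i.
rewrite (edotDl z1) edotZl (edotBl z2 z1).
set A := edot z1 _; set B := edot z2 _; set c := edot _ (w i); set K := _ * enorm _.
rewrite !ler_norml => /andP [h2 h3] /andP [h4 h5].
apply/andP; split; nra.
Qed.

Lemma var_ineq (R : realType) d m (X : set 'rV[R]_d) (Pi : 'M[R]_(d, m)) (eps : R)
  l (w : 'I_l -> 'rV[R]_d) u b p :
  Ftilde X Pi eps w u b ->
  (forall z', Ftilde X Pi eps w u z' -> enorm b <= enorm z') ->
  Ftilde X Pi eps w u p ->
  enorm (p - b) ^+ 2 <= enorm p ^+ 2 - enorm b ^+ 2.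
Proof.
move=> Fb hb Fp.
have key : forall t, 0 < t -> t <= 1 -> 0 <= 2 * edot b (p - b) + t * enorm (p - b) ^+ 2.
  move=> t t0 t1.
  have := hb _ (Ftilde_convex (ltW t0) t1 Fb Fp).
  move=> H.
  have H2 : enorm b ^+ 2 <= enorm (b + t *: (p - b)) ^+ 2.
    have := enorm_ge0 b; rewrite !expr2; nra.
  rewrite sq_add edotZr enormZ (ger0_norm (ltW t0)) in H2.
  have : 0 <= t * (2 * edot b (p - b) + t * enorm (p - b) ^+ 2).
    rewrite !expr2 in H2 *; nra.
  by rewrite pmulr_rge0.
have := lim0 key (sqr_ge0 _).
have E : enorm p ^+ 2 = enorm b ^+ 2 + 2 * edot b (p - b) + enorm (p - b) ^+ 2.
  by rewrite -sq_add addrC subrK.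
lra.
Qed.
Lemma step_num (R : realType) (eps T Tv s lam A B E : R) :
  0 < eps -> eps < 1 -> 0 <= s -> 0 <= lam -> lam <= 1 -> lam * T * eps = 150 * s ->
  `|A| <= eps / 30 * T -> `|B| <= T * (eps / 240) -> `|E| <= 3 * s -> T - 3 * s <= Tv ->
  `|A + lam * (B - A) - E| <= eps / 30 * Tv.
Proof.
move=> h0 h1 hs hl0 hl1 hl; rewrite !ler_norml => /andP [a1 a2] /andP [b1 b2] /andP [e1 e2] hT.
have p1 : 0 <= (1 - lam) * (eps / 30 * T - A) by apply: mulr_ge0; lra.
have p2 : 0 <= (1 - lam) * (eps / 30 * T + A) by apply: mulr_ge0; lra.
have p3 : 0 <= lam * (T * (eps / 240) - B) by apply: mulr_ge0; lra.
have p4 : 0 <= lam * (T * (eps / 240) + B) by apply: mulr_ge0; lra.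
have p5 : eps / 30 * (T - 3 * s) <= eps / 30 * Tv by apply: ler_wpM2l; lra.
have p6 : 0 <= (1 - eps) * s by apply: mulr_ge0; lra.
apply/andP; split; lra.
Qed.

Lemma final_num (R : realType) (eps T s N D1 D2 E Pn Bu Bv Q q : R) :
  0 < eps -> eps < 1 -> 0 <= s -> 480 * s < eps * T -> 0 <= Q -> Q * Q = T ->
  0 <= q -> q * q = s ->
  0 <= N -> N <= D1 + E -> 0 <= D1 -> D1 * eps <= 300 * s -> 0 <= E ->
  E ^+ 2 <= Pn ^+ 2 - Bv ^+ 2 ->
  0 <= Bv -> Bv <= Pn -> Pn <= Bu + D1 -> Bu <= Bv + D2 -> D2 * eps <= 300 * s ->
  Bu <= T ->
  N <= eps^-1 * Num.max 1200 (480 + 128 * Q) * q.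
Proof.
move=> h0 h1 hs hsT hQ0 hQ hq0 hq hN hND hD1 hD1e hE hE2 hBv hBvP hPn hBu hD2e hBuT.
set ie := eps^-1.
have hie : eps * ie = 1 by rewrite /ie mulfV // gt_eqF.
have hie1 : 1 <= ie by rewrite /ie invf_ge1 //; lra.
set K := 300 * s * ie.
have hK0 : 0 <= K by rewrite /K; apply: mulr_ge0; lra.
have hKe : K * eps = 300 * s by rewrite /K -mulrA (mulrC ie) hie mulr1.
have hD1K : D1 <= K.
  rewrite -(ler_pM2r h0) hKe; lra.
have hD2K : D2 <= K.
  rewrite -(ler_pM2r h0) hKe; lra.
have hKT : K <= T.
  rewrite -(ler_pM2r h0) hKe; lra.
have hT0 : 0 <= T by lra.
have hPB : (Pn - Bv) * (Pn + Bv) <= (2 * K) * (4 * T).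
  by apply: ler_pM; lra.
have hE2' : E * E <= 8 * (K * T).
  rewrite expr2 in hE2; rewrite !expr2 in hE2; lra.
have hKK : K * K <= K * T by apply: ler_wpM2l.
have hN2 : N * N <= 18 * (K * T).
  have h1' : N * N <= (D1 + E) * (D1 + E) by apply: ler_pM.
  have h2' : D1 * D1 <= K * K by apply: ler_pM.
  have h3' : 0 <= (D1 - E) * (D1 - E) by rewrite -expr2 sqr_ge0.
  lra.
have hKT2 : K * T <= 300 * (ie * ie) * (T * s).
  rewrite /K.
  have : 0 <= (ie * ie - ie) * (T * s).
    apply: mulr_ge0; last by apply: mulr_ge0.
    have : ie * 1 <= ie * ie by apply: ler_wpM2l; lra.
    lra.
  move=> H; have -> : 300 * s * ie * T = 300 * (ie * (T * s)) by ring.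
  have -> : 300 * (ie * ie) * (T * s) = 300 * (ie * ie * (T * s)) by ring.
  by rewrite ler_pM2l //; lra.
have hZ : N <= 128 * ie * Q * q.
  apply: sq_le.
    by apply: mulr_ge0 => //; apply: mulr_ge0 => //; apply: mulr_ge0; lra.
  have -> : (128 * ie * Q * q) ^+ 2 = 16384 * (ie * ie) * ((Q * Q) * (q * q)) by ring.
  rewrite hQ hq expr2.
  have : 0 <= (ie * ie) * (T * s) by apply: mulr_ge0; [apply: mulr_ge0; lra | apply: mulr_ge0].
  lra.
apply: le_trans hZ _.
have hM : 128 * Q <= Num.max 1200 (480 + 128 * Q).
  by rewrite le_max; apply/orP; right; lra.
have -> : 128 * ie * Q * q = ie * (128 * Q) * q by ring.
apply: ler_wpM2r => //; apply: ler_wpM2l => //.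
by apply: le_trans hie1.
Qed.

Lemma lam_num (R : realType) (eps T s : R) :
  0 < eps -> 0 < T -> 0 <= s -> 150 * s <= eps * T ->
  [/\ 0 <= 150 * s / (eps * T), 150 * s / (eps * T) <= 1 &
      150 * s / (eps * T) * T * eps = 150 * s].
Proof.
move=> h0 hT hs h; have heT : 0 < eps * T by rewrite mulr_gt0.
split.
- by apply: divr_ge0; [rewrite mulr_ge0 //; lra | exact: ltW].
- by rewrite ler_pdivrMr // mul1r.
- by field; rewrite !gt_eqF.
Qed.

Lemma D_num (R : realType) (eps T s lam D Z B : R) :
  0 < eps -> 0 <= lam -> lam * T * eps = 150 * s -> D <= lam * (Z + B) ->
  Z <= T -> B <= T -> D * eps <= 300 * s.
Proof.
move=> h0 hl hlT hD hZ hB.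
have h1 : lam * (Z + B) <= lam * (2 * T) by apply: ler_wpM2l => //; lra.
have h2 : D * eps <= lam * (2 * T) * eps by apply: ler_wpM2r; [lra | lra].
have -> : 300 * s = lam * (2 * T) * eps.
  rewrite (_ : lam * (2 * T) * eps = 2 * (lam * T * eps)); last by ring.
  by rewrite hlT; ring.
by [].
Qed.
Lemma enormBle (R : realType) n (x y : 'rV[R]_n) : enorm (x - y) <= enorm x + enorm y.
Proof. by have := enormD x (- y); rewrite enormN. Qed.

Lemma ar1 (R : realType) (a b : R) : b <= 2 * a -> a + b <= 3 * a.
Proof. lra. Qed.
Lemma ar2 (R : realType) (a b c d : R) : a <= b + c -> c <= d -> a <= b + d.
Proof. lra. Qed.
Lemma ar3 (R : realType) (s x : R) : 0 <= s -> 480 * s < x -> 150 * s <= x.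
Proof. lra. Qed.
Lemma ar4 (R : realType) (a b c : R) : a <= b + c -> a - c <= b.
Proof. lra. Qed.
Lemma ar5 (R : realType) (s eT T Tv : R) :
  0 <= s -> 480 * s < eT -> eT <= T -> T <= Tv + 3 * s -> 0 < Tv.
Proof. lra. Qed.
Lemma ar6 (R : realType) (eps s T Tv : R) : 0 <= s ->
  eps * (T - 3 * s) <= eps * Tv -> eps * s <= s -> 480 * s < eps * T -> 150 * s <= eps * Tv.
Proof. rewrite mulrBr (mulrCA eps 3 s); lra. Qed.

Lemma addKr' (R : realType) n (a x : 'rV[R]_n) : (a + x) - a = x.
Proof. by rewrite addrC addKr. Qed.

Lemma addsubK (R : realType) n (a b : 'rV[R]_n) : a + (b - a) = b.
Proof. by rewrite addrC subrK. Qed.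

Lemma subsubK (R : realType) n (a b : 'rV[R]_n) : a - (a - b) = b.
Proof. by rewrite opprB addrC subrK. Qed.

Lemma secant_dot (R : realType) d (X : set 'rV[R]_d) (e w : 'rV[R]_d) :
  secants X w -> `|edot e w| <= enorm e.
Proof.
move=> Hw; apply: le_trans (CSabs e w) _.
rewrite -{2}(mulr1 (enorm e)); apply: ler_wpM2l; [exact: enorm_ge0 | exact: secants_norm Hw].
Qed.


Unset Implicit Arguments.

Theorem lemma4p1 (R : realType) (d m l : nat) (X : set 'rV[R]_d)
  (eps : R) (w : 'I_l -> 'rV[R]_d) (Pi : 'M[R]_(d, m))
  (Hreach : (0 < reach X)%E)
  (Hnn : forall u v, Xtilde X u -> Xtilde X v ->
           enorm (nn X u - nn X v) <= 2 * enorm (u - v))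
  (Heps : 0 < eps < 1)
  (Hw : forall i, secants X (w i))
  (Hnet : forall v, secants X v -> exists i, enorm (v - w i) < eps / 40)
  (HPi : convex_hull_distortion Pi (eps / 240) (secants X))
  (HF : forall u, Xtilde X u -> exists z, Ftilde X Pi eps w u z)
  (u : 'rV[R]_d) (Hu : Xtilde X u) :
  (eclosure X u ->
     forall v, enorm (u - v) < 1 -> Xtilde X v ->
       enorm (beta X Pi eps w u - beta X Pi eps w v)
         <= 3 * Num.sqrt (enorm (u - v))) /\
  (~ eclosure X u ->
     let r_u := Num.min 1 (eps * enorm (u - nn X u) / 480) in
     let C_u := eps^-1 * Num.max 1200 (480 + 128 * Num.sqrt (enorm (u - nn X u))) in
     forall v, enorm (u - v) < r_u -> Xtilde X v ->
       enorm (beta X Pi eps w u - beta X Pi eps w v)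
         <= C_u * Num.sqrt (enorm (u - v))).
Proof.
clear Hreach HF Hnet; case/andP: Heps => he0 he1.
have BS := beta_spec he0 Hw HPi.
split.
- move=> Hcl v hv Hv.
  have [Cu1 Cu2] := nn_spec Hu; have [Cv1 Cv2] := nn_spec Hv.
  have hu0 : enorm (u - nn X u) = 0.
    by apply/eqP; rewrite eq_le enorm_ge0 andbT; have := Cu2 _ Hcl; rewrite subrr enorm0.
  have [_ _ [zu [hzu _ Fzu]]] := BS u.
  have [_ mu _] := BS u.
  have [Fv _ [zv [hzv _ Fzv]]] := BS v.
  have [_ mv _] := BS v.
  have hbu : enorm (beta X Pi eps w u) <= 0.
    by apply: le_trans (mu _ Fzu) _; rewrite -hu0.
  have hbv : enorm (beta X Pi eps w v) <= enorm (u - v).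
    apply: le_trans (mv _ Fzv) _; apply: le_trans hzv _.
    by rewrite (enormB u v); exact: Cv2.
  set s := enorm (u - v) in hv hbv *.
  have hs0 : 0 <= s := enorm_ge0 _.
  have hq := sqr_sqrtr hs0; have hq0 := sqrtr_ge0 s.
  have hq1 : Num.sqrt s <= 1 by rewrite -sqrtr1 ler_sqrt // ltW.
  apply: le_trans (enormBle _ _) _.
  move: hq hq0 hq1; set q := Num.sqrt s => hq hq0 hq1.
  rewrite expr2 in hq.
  have hqq : q * q <= q * 1 := ler_wpM2l hq0 hq1.
  apply: le_trans (lerD hbu hbv) _; rewrite add0r -hq.
  apply: le_trans hqq _; rewrite mulr1.
  by rewrite ler_peMl // ler1n.
- move=> Hncl ru Cu v hv Hv.
  have [Cu1 Cu2] := nn_spec Hu.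
  have hT : 0 < enorm (u - nn X u).
    rewrite lt0r enorm_ge0 andbT; apply/eqP => /enorm_eq0 /eqP.
    by rewrite subr_eq0 => /eqP E; apply: Hncl; rewrite E.
  move: hv; rewrite /ru lt_min => /andP [hs1 hs2].
  have hs0 := enorm_ge0 (u - v).
  have he : enorm ((v - nn X v) - (u - nn X u)) <= 3 * enorm (u - v).
    have -> : (v - nn X v) - (u - nn X u) = (v - u) - (nn X v - nn X u).
      by rewrite !opprB addrACA [in RHS]addrACA (addrC (- nn X v)).
    apply: le_trans (enormBle _ _) _.
    have H := Hnn v u Hv Hu; rewrite (enormB v u) in H *; exact: ar1 H.
  have hTv1 : enorm (u - nn X u) <= enorm (v - nn X v) + 3 * enorm (u - v).
    have H := enormBle (v - nn X v) ((v - nn X v) - (u - nn X u)).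
    rewrite subsubK in H; exact: ar2 H he.
  have hTv2 : enorm (v - nn X v) <= enorm (u - nn X u) + 3 * enorm (u - v).
    have H := enormD (u - nn X u) ((v - nn X v) - (u - nn X u)).
    rewrite addsubK in H; exact: ar2 H he.
  have [Fu mu [zu [hzu hzui Fzu]]] := BS u.
  have [Fv mv [zv [hzv hzvi Fzv]]] := BS v.
  have hs480 : 480 * enorm (u - v) < eps * enorm (u - nn X u).
    move: hs2; clear; move: (enorm (u - v)) (eps * enorm (u - nn X u)) => a b.
    have h480 : (0 : R) < 480 by lra.
    by rewrite (ltr_pdivlMr _ _ h480) mulrC.
  have h150 : 150 * enorm (u - v) <= eps * enorm (u - nn X u) := ar3 hs0 hs480.
  have [hl0 hl1 hlT] := lam_num he0 hT hs0 h150.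
  set lam := 150 * enorm (u - v) / (eps * enorm (u - nn X u)) in hl0 hl1 hlT.
  pose p := beta X Pi eps w u + lam *: (zu - beta X Pi eps w u).
  have Fp : Ftilde X Pi eps w v p.
    apply/Ftilde_abs => i.
    have hA := (Ftilde_abs _ _ _ _ _ _).1 Fu i.
    have hB := hzui i.
    have hE : `|edot ((v - nn X v) - (u - nn X u)) (w i)| <= 3 * enorm (u - v).
      exact: le_trans (secant_dot _ (Hw i)) he.
    have -> : edot p (applyPi Pi (w i)) - edot (v - nn X v) (w i) =
      (edot (beta X Pi eps w u) (applyPi Pi (w i)) - edot (u - nn X u) (w i)) +
      lam * ((edot zu (applyPi Pi (w i)) - edot (u - nn X u) (w i)) -
             (edot (beta X Pi eps w u) (applyPi Pi (w i)) - edot (u - nn X u) (w i))) -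
      edot ((v - nn X v) - (u - nn X u)) (w i).
      by rewrite /p !(edotDl, edotZl, edotNl); ring.
    have hTT : enorm (u - nn X u) - 3 * enorm (u - v) <= enorm (v - nn X v).
      exact: ar4 hTv1.
    exact: (step_num he0 he1 hs0 hl0 hl1 hlT hA hB hE hTT).
  have hTv : 0 < enorm (v - nn X v).
    have H : eps * enorm (u - nn X u) <= enorm (u - nn X u).
      exact: ler_piMl (enorm_ge0 _) (ltW he1).
    exact: ar5 hs0 hs480 H hTv1.
  have h150' : 150 * enorm (u - v) <= eps * enorm (v - nn X v).
    have h1 : eps * (enorm (u - nn X u) - 3 * enorm (u - v)) <= eps * enorm (v - nn X v).
      by apply: ler_wpM2l; [exact: ltW | exact: ar4 hTv1].
    have h2 : eps * enorm (u - v) <= enorm (u - v).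
      exact: ler_piMl (enorm_ge0 _) (ltW he1).
    exact: ar6 hs0 h1 h2 hs480.
  have [hm0 hm1 hmT] := lam_num he0 hTv hs0 h150'.
  set mu' := 150 * enorm (u - v) / (eps * enorm (v - nn X v)) in hm0 hm1 hmT.
  pose q := beta X Pi eps w v + mu' *: (zv - beta X Pi eps w v).
  have Fq : Ftilde X Pi eps w u q.
    apply/Ftilde_abs => i.
    have hA := (Ftilde_abs _ _ _ _ _ _).1 Fv i.
    have hB := hzvi i.
    have hE : `|edot ((u - nn X u) - (v - nn X v)) (w i)| <= 3 * enorm (u - v).
      by apply: le_trans (secant_dot _ (Hw i)) _; rewrite enormB.
    have -> : edot q (applyPi Pi (w i)) - edot (u - nn X u) (w i) =
      (edot (beta X Pi eps w v) (applyPi Pi (w i)) - edot (v - nn X v) (w i)) +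
      mu' * ((edot zv (applyPi Pi (w i)) - edot (v - nn X v) (w i)) -
             (edot (beta X Pi eps w v) (applyPi Pi (w i)) - edot (v - nn X v) (w i))) -
      edot ((u - nn X u) - (v - nn X v)) (w i).
      by rewrite /q !(edotDl, edotZl, edotNl); ring.
    have hTT : enorm (v - nn X v) - 3 * enorm (u - v) <= enorm (u - nn X u).
      exact: ar4 hTv2.
    exact: (step_num he0 he1 hs0 hm0 hm1 hmT hA hB hE hTT).
  have hBu : enorm (beta X Pi eps w u) <= enorm (u - nn X u) := le_trans (mu _ Fzu) hzu.
  have hBv : enorm (beta X Pi eps w v) <= enorm (v - nn X v) := le_trans (mv _ Fzv) hzv.
  have hpv := mv _ Fp.
  have hqu := mu _ Fq.
  have hD1 : enorm (p - (beta X Pi eps w u)) <= lam * (enorm zu + enorm (beta X Pi eps w u)).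
    rewrite /p addKr' enormZ (ger0_norm hl0); exact: (ler_wpM2l hl0 (enormBle _ _)).
  have hD1e := D_num he0 hl0 hlT hD1 hzu hBu.
  have hD2 : enorm (q - (beta X Pi eps w v)) <= mu' * (enorm zv + enorm (beta X Pi eps w v)).
    rewrite /q addKr' enormZ (ger0_norm hm0); exact: (ler_wpM2l hm0 (enormBle _ _)).
  have hD2e := D_num he0 hm0 hmT hD2 hzv hBv.
  have hPn : enorm p <= enorm (beta X Pi eps w u) + enorm (p - (beta X Pi eps w u)).
    by have := enormD (beta X Pi eps w u) (p - (beta X Pi eps w u)); rewrite addrC subrK.
  have hQn : enorm q <= enorm (beta X Pi eps w v) + enorm (q - (beta X Pi eps w v)).
    by have := enormD (beta X Pi eps w v) (q - (beta X Pi eps w v)); rewrite addrC subrK.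
  have hvar := var_ineq Fv mv Fp.
  have hN : enorm ((beta X Pi eps w u) - (beta X Pi eps w v)) <= enorm (p - (beta X Pi eps w u)) + enorm (p - (beta X Pi eps w v)).
    have := enormD ((beta X Pi eps w u) - p) (p - (beta X Pi eps w v)).
    by rewrite addrA subrK (enormB (beta X Pi eps w u) p).
  rewrite /Cu.
  have hQ : Num.sqrt (enorm (u - nn X u)) * Num.sqrt (enorm (u - nn X u)) = enorm (u - nn X u).
    by rewrite -expr2 (sqr_sqrtr (enorm_ge0 _)).
  have hq : Num.sqrt (enorm (u - v)) * Num.sqrt (enorm (u - v)) = enorm (u - v).
    by rewrite -expr2 (sqr_sqrtr (enorm_ge0 _)).
  apply: (final_num (D1 := enorm (p - (beta X Pi eps w u))) (D2 := enorm (q - (beta X Pi eps w v))) (E := enorm (p - (beta X Pi eps w v)))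
            (Pn := enorm p) (Bu := enorm (beta X Pi eps w u)) (Bv := enorm (beta X Pi eps w v)) he0 he1 hs0 hs480
            (sqrtr_ge0 _) hQ (sqrtr_ge0 _) hq (enorm_ge0 _) hN (enorm_ge0 _) hD1e
            (enorm_ge0 _) hvar (enorm_ge0 _) hpv hPn _ hD2e hBu).
  exact: le_trans hqu hQn.
Qed.
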